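(* Let $A$ be a Banach algebra such that $A^2=\mathrm{span}\{ab:a,b\in A\}$ is dense in $A$, and consider $A\bowtie^{\mathrm{id}}A$. A map $D:A\bowtie^{\mathrm{id}}A\to(A\bowtie^{\mathrm{id}}A)^*\cong A^*\oplus_\infty A^*$ is a bounded derivation if and only if there exist $D_1,D_2\in\mathcal Z^1(A,A^* )$ with $$D(a,b)=\big(D_1(a)+D_2(b),\ D_2(a)+D_2(b)\big)\qquad(a,b\in A).$$ Moreover, for $f,g\in A^*$, $D=\mathrm{ad}_{(f,g)}$ if and only if $D_1=\mathrm{ad}_f$ and $D_2=\mathrm{ad}_g$.
   Context: $A\bowtie^{\mathrm{id}}A$ is the Banach space $\{(a,b):a,b\in A\}$ with norm $\|a\|+\|b\|$ and product $(a,b)(a',b')=(aa',\ ab'+ba'+bb')$ (the amalgamation of $A$ with $A$ along $A$ with respect to the identity map). Its dual is identified with $A^*\oplus_\infty A^*$ via $\langle(a,b),(f,g)\rangle=f(a)+g(b)$. For a Banach algebra $C$, $C^*$ is a $C$-bimodule via $\langle c\cdot f,x\rangle=f(xc)$, $\langle f\cdot c,x\rangle=f(cx)$; $\mathcal Z^1(C,C^* )$ is the space of bounded derivations $D:C\to C^*$ ($D(xy)=x\cdot D(y)+D(x)\cdot y$), and $\mathrm{ad}_f(c)=c\cdot f-f\cdot c$ for $f\in C^*$. *)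

(* Defs.v *)
From Stdlib Require Import Reals.
From HB Require Import structures.
From mathcomp Require Import all_boot all_algebra.
Set Implicit Arguments. Unset Strict Implicit. Unset Printing Implicit Defensive.
Import GRing.Theory.
Local Open Scope ring_scope.

Definition is_absval (K : fieldType) (abs : K -> R) : Prop :=
  [/\ (forall x : K, Rle 0 (abs x)),
      (forall x : K, abs x = R0 <-> x = 0),
      (forall x y : K, abs (x * y) = Rmult (abs x) (abs y)) &
      (forall x y : K, Rle (abs (x + y)) (Rplus (abs x) (abs y)))].

Section Generic.
Variables (K : fieldType) (abs : K -> R).

Definition is_norm (V : lmodType K) (norm : V -> R) : Prop :=
  [/\ (forall x, Rle 0 (norm x)),
      (forall x, norm x = R0 -> x = 0),
      (forall (k : K) x, norm (k *: x) = Rmult (abs k) (norm x)) &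
      (forall x y, Rle (norm (x + y)) (Rplus (norm x) (norm y)))].

Definition cauchy_seq (V : lmodType K) (norm : V -> R) (u : nat -> V) : Prop :=
  forall eps : R, Rlt 0 eps -> exists N : nat,
    forall m n : nat, (N <= m)%N -> (N <= n)%N -> Rlt (norm (u m - u n)) eps.

Definition converges (V : lmodType K) (norm : V -> R) (u : nat -> V) : Prop :=
  exists l : V, forall eps : R, Rlt 0 eps -> exists N : nat,
    forall n : nat, (N <= n)%N -> Rlt (norm (u n - l)) eps.

Definition complete (V : lmodType K) (norm : V -> R) : Prop :=
  forall u : nat -> V, cauchy_seq norm u -> converges norm u.

Definition banach_algebra (A : lmodType K) (mul : A -> A -> A) (norm : A -> R)
  : Prop :=
  [/\ is_norm norm, complete norm,
      (forall x y, Rle (norm (mul x y)) (Rmult (norm x) (norm y))) &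
      [/\ (forall x y z, mul (mul x y) z = mul x (mul y z)),
      (forall (k : K) x y z, mul (k *: x + y) z = k *: mul x z + mul y z) &
      (forall (k : K) x y z, mul z (k *: x + y) = k *: mul z x + mul z y)]].

Definition in_span_products (A : lmodType K) (mul : A -> A -> A) (x : A) : Prop :=
  exists (n : nat) (k : 'I_n -> K) (a b : 'I_n -> A),
    x = \sum_(i < n) k i *: mul (a i) (b i).

Definition dense (A : lmodType K) (norm : A -> R) (S : A -> Prop) : Prop :=
  forall (x : A) (eps : R), Rlt 0 eps -> exists y, S y /\ Rlt (norm (x - y)) eps.

Definition is_dual (V : lmodType K) (norm : V -> R) (f : V -> K) : Prop :=
  (forall (k : K) x y, f (k *: x + y) = k * f x + f y) /\
  (exists M : R, forall x, Rle (abs (f x)) (Rmult M (norm x))).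

Definition lact (V : Type) (mul : V -> V -> V) (c : V) (f : V -> K) : V -> K :=
  fun x => f (mul x c).
Definition ract (V : Type) (mul : V -> V -> V) (f : V -> K) (c : V) : V -> K :=
  fun x => f (mul c x).

Definition ad (V : Type) (mul : V -> V -> V) (f : V -> K) (c : V) : V -> K :=
  fun x => lact mul c f x - ract mul f c x.

(* D : V -> V^dual is a bounded derivation, i.e. D is in Z^1(V, V^dual).
   Boundedness of D : V -> V^dual (operator norm on V^dual) is written out:
   |<D c, x>| <= M ||c|| ||x||. *)
Definition bounded_derivation (V : lmodType K) (mul : V -> V -> V) (norm : V -> R)
  (D : V -> V -> K) : Prop :=
  [/\ (forall c, is_dual norm (D c)),
      (forall (k : K) c c' x, D (k *: c + c') x = k * D c x + D c' x),
      (exists M : R, forall c x,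
          Rle (abs (D c x)) (Rmult (Rmult M (norm c)) (norm x))) &
      (forall c c' x, D (mul c c') x = lact mul c (D c') x + ract mul (D c) c' x)].

End Generic.

Section Amalgamation.
Variables (K : fieldType) (A : lmodType K) (mul : A -> A -> A) (norm : A -> R).

Definition amal_mul (c c' : A * A) : A * A :=
  (mul c.1 c'.1, mul c.1 c'.2 + mul c.2 c'.1 + mul c.2 c'.2).

Definition amal_norm (c : A * A) : R := Rplus (norm c.1) (norm c.2).

(* the identification A^dual (+)_oo A^dual -> (A ⋈ A)^dual : <(a,b),(f,g)> = f a + g b *)
Definition amal_pair (f g : A -> K) : A * A -> K := fun c => f c.1 + g c.2.

End Amalgamation.

(* Main.v *)
Require Import Defs.
From Stdlib Require Import Reals Lra Psatz.
From HB Require Import structures.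
From mathcomp Require Import all_boot all_algebra.
Import GRing.Theory.
Local Open Scope R_scope.

Lemma Rb1 (M nu ny : R) : Rmult (Rmult M (Rplus nu nu)) (Rplus R0 ny) = Rmult (Rmult M (Rplus ny ny)) nu.
Proof. ring. Qed.
Lemma Rb2 (M nv nx : R) : Rmult (Rmult M (Rplus R0 nv)) (Rplus nx nx) = Rmult (Rmult M (Rplus nx nx)) nv.
Proof. ring. Qed.
Lemma Rid (x : R) : x = Rmult x x -> x <> R0 -> x = R1.
Proof. intros H H0. apply (Rmult_eq_reg_l x); [rewrite Rmult_1_r; auto | auto]. Qed.
Lemma Rsq1 (x : R) : Rle R0 x -> Rmult x x = R1 -> x = R1.
Proof. intros. nra. Qed.
Lemma Rb4 (M1 M2 na nb nx ny x1 x2 x3 x4 : R) :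
  Rle R0 na -> Rle R0 nb -> Rle R0 nx -> Rle R0 ny ->
  Rle x1 (Rmult (Rmult M1 na) nx) -> Rle x2 (Rmult (Rmult M2 nb) nx) ->
  Rle x3 (Rmult (Rmult M2 na) ny) -> Rle x4 (Rmult (Rmult M2 nb) ny) ->
  Rle (Rplus (Rplus x1 x2) (Rplus x3 x4))
      (Rmult (Rmult (Rplus (Rabs M1) (Rabs M2)) (Rplus na nb)) (Rplus nx ny)).
Proof.
intros Ha Hb Hx Hy H1 H2 H3 H4.
assert (A1 := Rle_abs M1). assert (A2 := Rle_abs M2).
assert (P1 := Rabs_pos M1). assert (P2 := Rabs_pos M2).
assert (Q1 : Rle (Rmult (Rmult M1 na) nx) (Rmult (Rmult (Rabs M1) na) nx)).
{ apply Rmult_le_compat_r; auto. apply Rmult_le_compat_r; auto. }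
assert (Q2 : Rle (Rmult (Rmult M2 nb) nx) (Rmult (Rmult (Rabs M2) nb) nx)).
{ apply Rmult_le_compat_r; auto. apply Rmult_le_compat_r; auto. }
assert (Q3 : Rle (Rmult (Rmult M2 na) ny) (Rmult (Rmult (Rabs M2) na) ny)).
{ apply Rmult_le_compat_r; auto. apply Rmult_le_compat_r; auto. }
assert (Q4 : Rle (Rmult (Rmult M2 nb) ny) (Rmult (Rmult (Rabs M2) nb) ny)).
{ apply Rmult_le_compat_r; auto. apply Rmult_le_compat_r; auto. }
assert (E : Rmult (Rmult (Rplus (Rabs M1) (Rabs M2)) (Rplus na nb)) (Rplus nx ny) =
  Rabs M1 * na * nx + Rabs M2 * nb * nx + (Rabs M2 * na * ny + Rabs M2 * nb * ny)
  + (Rabs M2 * na * nx + Rabs M1 * nb * nx + Rabs M1 * na * ny + Rabs M1 * nb * ny)) by ring.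
rewrite E.
assert (R1p : Rle R0 (Rabs M2 * na * nx + Rabs M1 * nb * nx + Rabs M1 * na * ny + Rabs M1 * nb * ny)).
{ repeat apply Rplus_le_le_0_compat; repeat apply Rmult_le_pos; auto. }
lra.
Qed.

Local Close Scope R_scope.
Local Open Scope ring_scope.
Set Implicit Arguments. Unset Strict Implicit.
Lemma lin0 (K : fieldType) (V : lmodType K) (h : V -> K)
  (hl : forall k x y, h (k *: x + y) = k * h x + h y) : h 0 = 0.
Proof. have := hl 1 0 0; rewrite scale1r addr0 mul1r => H.
by apply: (addrI (h 0)); rewrite addr0 -H. Qed.

Lemma linD (K : fieldType) (V : lmodType K) (h : V -> K)
  (hl : forall k x y, h (k *: x + y) = k * h x + h y) x y : h (x + y) = h x + h y.
Proof. by have := hl 1 x y; rewrite scale1r mul1r. Qed.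

Lemma linZ (K : fieldType) (V : lmodType K) (h : V -> K)
  (hl : forall k x y, h (k *: x + y) = k * h x + h y) k x : h (k *: x) = k * h x.
Proof. by have := hl k x 0; rewrite addr0 (lin0 hl) addr0. Qed.

Lemma linN (K : fieldType) (V : lmodType K) (h : V -> K)
  (hl : forall k x y, h (k *: x + y) = k * h x + h y) x : h (- x) = - h x.
Proof. by rewrite -scaleN1r (linZ hl) mulN1r. Qed.

Lemma dense_zero (K : fieldType) (abs : K -> R) (A : lmodType K)
  (mul : A -> A -> A) (norm : A -> R) (HK : is_absval abs)
  (Hn : is_norm abs norm) (Hdense : dense norm (in_span_products mul))
  (h : A -> K) (hl : forall k x y, h (k *: x + y) = k * h x + h y)
  (hp : forall u v, h (mul u v) = 0)
  (hb : exists C, forall u, Rle (abs (h u)) (Rmult C (norm u))) :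
  forall a, h a = 0.
Proof.
move=> a; case: hb => C HC.
have hspan : forall y, in_span_products mul y -> h y = 0.
  move=> y [n [k [a' [b' ->]]]].
  elim/big_ind: _ => //; first exact: lin0.
    by move=> x1 x2 hx hy; rewrite (linD hl) hx hy addr0.
  by move=> i _; rewrite (linZ hl) hp mulr0.
case: HK => Habs0 Habseq _ _.
case: Hn => Hn0 _ _ _.
case: (Req_dec (abs (h a)) R0) => [/Habseq // | Hne].
have tpos : Rlt R0 (abs (h a)) by have := Habs0 (h a); lra.
set t := abs (h a) in tpos Hne *.
have cpos : Rlt R0 (Rplus (Rabs C) R1) by have := Rabs_pos C; lra.
have epos : Rlt R0 (Rdiv t (Rplus (Rabs C) R1)) by apply: Rdiv_lt_0_compat.
case: (Hdense a _ epos) => y [Sy Hy].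
have ha : h a = h (a - y).
  have := linD hl (a - y) y; rewrite subrK (hspan y Sy) addr0 => ->; done.
have H1 := HC (a - y). rewrite -ha -/t in H1.
have H2 := Rmult_lt_compat_l _ _ _ cpos Hy.
have E : Rmult (Rplus (Rabs C) R1) (Rdiv t (Rplus (Rabs C) R1)) = t.
  field; lra.
rewrite E in H2.
have := Rle_abs C; have := Hn0 (a - y); nra.
Qed.

From mathcomp Require Import ring.

Lemma vlin0 (K : fieldType) (V W : lmodType K) (f : V -> W)
  (hl : forall k x y, f (k *: x + y) = k *: f x + f y) : f 0 = 0.
Proof. have := hl 1 0 0; rewrite !scale1r addr0 => H.
by apply: (addrI (f 0)); rewrite addr0 -H. Qed.

Lemma vlinD (K : fieldType) (V W : lmodType K) (f : V -> W)
  (hl : forall k x y, f (k *: x + y) = k *: f x + f y) x y : f (x + y) = f x + f y.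
Proof. by have := hl 1 x y; rewrite !scale1r. Qed.

Lemma vlinN (K : fieldType) (V W : lmodType K) (f : V -> W)
  (hl : forall k x y, f (k *: x + y) = k *: f x + f y) x : f (- x) = - f x.
Proof. by have := hl (-1) x 0; rewrite addr0 (vlin0 hl) addr0 !scaleN1r. Qed.

Lemma pairZD (K : fieldType) (A : lmodType K) (k : K) (x y x' y' : A) :
  k *: ((x, y) : A * A) + (x', y') = (k *: x + x', k *: y + y').
Proof. by []. Qed.
Lemma pairD (K : fieldType) (A : lmodType K) (x y x' y' : A) :
  ((x, y) : A * A) + (x', y') = (x + x', y + y').
Proof. by []. Qed.
Lemma pairN (K : fieldType) (A : lmodType K) (x y : A) :
  - ((x, y) : A * A) = (- x, - y).
Proof. by []. Qed.

Unset Implicit Arguments.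

Theorem proposition6p10 (K : fieldType) (abs : K -> R)
  (A : lmodType K) (mul : A -> A -> A) (norm : A -> R)
  (HK : is_absval abs)
  (HA : banach_algebra abs mul norm)
  (Hdense : dense norm (in_span_products mul)) :
  (forall D : A * A -> A * A -> K,
     bounded_derivation abs (amal_mul mul) (amal_norm norm) D <->
     exists D1 D2 : A -> A -> K,
       [/\ bounded_derivation abs mul norm D1,
           bounded_derivation abs mul norm D2 &
           forall a b x y : A,
             D (a, b) (x, y) = amal_pair (fun x => D1 a x + D2 b x)
                                         (fun y => D2 a y + D2 b y) (x, y)])
  /\
  (forall (D : A * A -> A * A -> K) (D1 D2 : A -> A -> K),
     bounded_derivation abs mul norm D1 ->
     bounded_derivation abs mul norm D2 ->
     (forall a b x y : A,
        D (a, b) (x, y) = amal_pair (fun x => D1 a x + D2 b x)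
                                    (fun y => D2 a y + D2 b y) (x, y)) ->
     forall f g : A -> K,
       is_dual abs norm f -> is_dual abs norm g ->
       ((forall c z, D c z = ad (amal_mul mul) (amal_pair f g) c z) <->
        ((forall a x, D1 a x = ad mul f a x) /\
         (forall a x, D2 a x = ad mul g a x)))).
Proof.
have [Hn Hc Hsub [Hass HmL HmR]] := HA.
have mul0l z : mul 0 z = 0 := vlin0 (fun k x y => HmL k x y z).
have mulNl x z : mul (- x) z = - mul x z := vlinN (fun k x y => HmL k x y z) x.
have mulDl x y z : mul (x + y) z = mul x z + mul y z := vlinD (fun k x y => HmL k x y z) x y.
have mul0r z : mul z 0 = 0 := vlin0 (fun k x y => HmR k x y z).
have mulNr x z : mul z (- x) = - mul z x := vlinN (fun k x y => HmR k x y z) x.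
have mulDr x y z : mul z (x + y) = mul z x + mul z y := vlinD (fun k x y => HmR k x y z) x y.
have [Hn0 Hn00 HnZ Hntri] := Hn.
have [Ha0 Haeq Hamul Hatri] := HK.
have abs0 : abs 0 = R0 by apply/Haeq.
have abs1 : abs 1 = R1.
  apply: Rid; first by rewrite -Hamul mulr1.
  by move/Haeq/eqP; rewrite oner_eq0.
have absN1 : abs (-1) = R1.
  by apply: Rsq1; [apply: Ha0 | rewrite -Hamul mulrNN mulr1].
have normN x : norm (- x) = norm x.
  by rewrite -scaleN1r HnZ absN1 Rmult_1_l.
have norm0 : norm 0 = R0.
  by have := HnZ 0 0; rewrite scale0r abs0 Rmult_0_l.
split.
- move=> D; split.
  + move=> [HDd HDl [M HM] HDder].
    have DD c c' z : D (c + c') z = D c z + D c' z := linD (fun k c c' => HDl k c c' z) c c'.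
    have DN c z : D (- c) z = - D c z := linN (fun k c c' => HDl k c c' z) c.
    have Dr0 c : D c (0, 0) = 0 := lin0 (proj1 (HDd c)).
    have DrD c z z' : D c (z + z') = D c z + D c z' := linD (proj1 (HDd c)) z z'.
    have DrN c z : D c (- z) = - D c z := linN (proj1 (HDd c)) z.
    have F1 a y : D (a, 0) (0, y) = D (0, a) (0, y).
      have H0 : D (a, - a) (0, y) = 0.
        apply: (dense_zero HK Hn Hdense (h := fun u => D (u, - u) (0, y))).
        * move=> k u u' /=; rewrite -HDl pairZD scalerN opprD //.
        * move=> u v /=.
          have -> : (mul u v, - mul u v) = amal_mul mul (u, - u) (v, - v).
            by rewrite /amal_mul /= !mulNl !mulNr opprK addrNK.
          rewrite HDder /lact /ract /amal_mul /=.
          rewrite !mulNl !mulNr !mul0l !mul0r oppr0 !add0r !addr0 !subrr.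
          by rewrite !Dr0 addr0.
        * exists (Rmult M (Rplus (norm y) (norm y))) => u.
          have := HM (u, - u) (0, y); rewrite /amal_norm /= normN norm0.
          by rewrite Rb1.
      move: H0; have -> : (a, - a) = ((a, 0) - (0, a) : A * A).
        by transitivity ((a - 0, 0 - a) : A * A); first by rewrite subr0 sub0r.
      by rewrite DD DN => /eqP; rewrite subr_eq0 => /eqP.
    have F2 v x : D (0, v) (x, 0) = D (0, v) (0, x).
      have H0 : D (0, v) (x, - x) = 0.
        apply: (dense_zero HK Hn Hdense (h := fun v => D (0, v) (x, - x))).
        * by move=> k u u' /=; rewrite -HDl pairZD scaler0 addr0.
        * move=> u w /=.
          have -> : (0, mul u w) = amal_mul mul (0, u) (0, w).
            by rewrite /amal_mul /= !mul0l !mul0r !add0r.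
          rewrite HDder /lact /ract /amal_mul /=.
          rewrite !mulNl !mulNr !mul0l !mul0r oppr0 !add0r !addr0 !subrr.
          by rewrite !Dr0 addr0.
        * exists (Rmult M (Rplus (norm x) (norm x))) => u.
          have := HM (0, u) (x, - x); rewrite /amal_norm /= normN norm0.
          by rewrite Rb2.
      move: H0; have -> : (x, - x) = ((x, 0) - (0, x) : A * A).
        by transitivity ((x - 0, 0 - x) : A * A); first by rewrite subr0 sub0r.
      by rewrite DrD DrN => /eqP; rewrite subr_eq0 => /eqP.
    pose D1 := fun a x => D (a, 0) (x, 0).
    pose D2 := fun b y => D (0, b) (0, y).
    exists D1, D2; split.
    * split.
      - move=> a; split.
          by move=> k x x'; rewrite /D1 -(proj1 (HDd _)) pairZD scaler0 addr0.
        have [Ma HMa] := proj2 (HDd (a, 0)).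
        exists Ma => x; have := HMa (x, 0).
        by rewrite /amal_norm /= norm0 Rplus_0_r.
      - by move=> k a a' x; rewrite /D1 -HDl pairZD scaler0 addr0.
      - exists M => a x; have := HM (a, 0) (x, 0).
        by rewrite /amal_norm /= norm0 !Rplus_0_r.
      - move=> a a' x; rewrite /D1 /lact /ract.
        have -> : (mul a a', 0) = amal_mul mul (a, 0) (a', 0).
          by rewrite /amal_mul /= !mul0l !mul0r !addr0.
        by rewrite HDder /lact /ract /amal_mul /= !mul0l !mul0r !addr0.
    * split.
      - move=> b; split.
          by move=> k y y'; rewrite /D2 -(proj1 (HDd _)) pairZD scaler0 addr0.
        have [Mb HMb] := proj2 (HDd (0, b)).
        exists Mb => y; have := HMb (0, y).
        by rewrite /amal_norm /= norm0 Rplus_0_l.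
      - by move=> k b b' y; rewrite /D2 -HDl pairZD scaler0 addr0.
      - exists M => b y; have := HM (0, b) (0, y).
        by rewrite /amal_norm /= norm0 !Rplus_0_l.
      - move=> b b' y; rewrite /D2 /lact /ract.
        have -> : (0, mul b b') = amal_mul mul (0, b) (0, b').
          by rewrite /amal_mul /= !mul0l !mul0r !add0r.
        by rewrite HDder /lact /ract /amal_mul /= !mul0l !mul0r !add0r.
    * move=> a b x y; rewrite /amal_pair /= /D1 /D2.
      have -> : (a, b) = ((a, 0) + (0, b) : A * A) by rewrite pairD addr0 add0r.
      have -> : (x, y) = ((x, 0) + (0, y) : A * A) by rewrite pairD addr0 add0r.
      rewrite DD !DrD (F1 a y) (F2 b x).
      ring.
  + move=> [D1 [D2 [HD1 HD2 HDf]]].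
    have [HD1d HD1l [M1 HM1] HD1der] := HD1.
    have [HD2d HD2l [M2 HM2] HD2der] := HD2.
    have D1D u v x : D1 (u + v) x = D1 u x + D1 v x := linD (fun k u v => HD1l k u v x) u v.
    have D2D u v x : D2 (u + v) x = D2 u x + D2 v x := linD (fun k u v => HD2l k u v x) u v.
    have D1rD a x x' : D1 a (x + x') = D1 a x + D1 a x' := linD (proj1 (HD1d a)) x x'.
    have D2rD a x x' : D2 a (x + x') = D2 a x + D2 a x' := linD (proj1 (HD2d a)) x x'.
    have Hb : forall a b x y, Rle (abs (D (a, b) (x, y)))
       (Rmult (Rmult (Rplus (Rabs M1) (Rabs M2)) (Rplus (norm a) (norm b))) (Rplus (norm x) (norm y))).
      move=> a b x y; rewrite HDf /amal_pair /=.
      apply: Rle_trans; first apply: Hatri.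
      apply: Rle_trans; first apply: Rplus_le_compat; first apply: Hatri.
        by apply: Hatri.
      by apply: Rb4.
    split.
    * move=> [a b]; split.
        move=> k [x y] [x' y']; rewrite pairZD !HDf /amal_pair /=.
        rewrite !(proj1 (HD1d _)) !(proj1 (HD2d _)); ring.
      exists (Rmult (Rplus (Rabs M1) (Rabs M2)) (Rplus (norm a) (norm b))).
      by move=> [x y]; apply: Hb.
    * move=> k [a b] [a' b'] [x y]; rewrite pairZD !HDf /amal_pair /=.
      rewrite !HD1l !HD2l; ring.
    * exists (Rplus (Rabs M1) (Rabs M2)) => [[a b] [x y]]; exact: Hb.
    * move=> [a b] [a' b'] [x y]; rewrite /lact /ract /amal_mul /= !HDf /amal_pair /=.
      rewrite ?D2D ?D1rD ?D2rD !HD1der !HD2der /lact /ract ?D2rD ?D1rD.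
      ring.
- move=> D D1 D2 HD1 HD2 HDf f g Hf Hg.
  have [HD1d HD1l _ _] := HD1.
  have [HD2d HD2l _ _] := HD2.
  have D10 y : D1 0 y = 0 := lin0 (fun k u v => HD1l k u v y).
  have D20 y : D2 0 y = 0 := lin0 (fun k u v => HD2l k u v y).
  have D1r0 a : D1 a 0 = 0 := lin0 (proj1 (HD1d a)).
  have D2r0 a : D2 a 0 = 0 := lin0 (proj1 (HD2d a)).
  have f0 : f 0 = 0 := lin0 (proj1 Hf).
  have g0 : g 0 = 0 := lin0 (proj1 Hg).
  have gD x y : g (x + y) = g x + g y := linD (proj1 Hg) x y.
  split.
  + move=> H; split => a x.
      have := H (a, 0) (x, 0).
      rewrite HDf /ad /lact /ract /amal_pair /amal_mul /=.
      by rewrite !mul0l !mul0r !addr0 ?g0 ?D20 ?D2r0 ?addr0 ?add0r ?D20 ?addr0.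
    have := H (0, a) (0, x).
    rewrite HDf /ad /lact /ract /amal_pair /amal_mul /=.
    by rewrite !mul0l !mul0r !add0r ?f0 ?D10 ?D1r0 ?D2r0 ?D20 ?add0r ?addr0 ?subr0 ?sub0r.
  + move=> [E1 E2] [a b] [x y].
    rewrite HDf /amal_pair /= !E1 !E2 /ad /lact /ract /amal_mul /amal_pair /= !gD.
    ring.
Qed.
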